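(* Under any parsimonious protocol $\Pi$, for each state of nature $\theta$ it is a best response for the sender never to stop at any transient memory state, i.e., to keep sending signals until the memory state reaches one of the two absorbing states, where the game ends and the receiver acts.
   Context: Setting. The state of nature is $\theta\in\Theta=\{H,L\}$ with prior $\Pr(\theta=H)=p\in(0,1)$. A sender privately observes $\theta$; a receiver does not. $S$ is a finite signal set; conditional on $\theta$, signals are i.i.d. with distribution $\pi_\theta$ on $S$, where $\pi_\theta(s)>0$ for all $s\in S,\theta\in\Theta$, and $\pi_H\neq\pi_L$. The receiver has a finite set of memory states $M$ and chooses a protocol $\Pi=(f,g,a)$: a transition function $f:M\times S\to\Delta(M)$ ($f(i,s)(j)$ is the probability of moving from memory state $i$ to $j$ after signal $s$), an initial distribution $g\in\Delta(M)$ of $m_0$, and an action rule $a:M\to[0,1]$ (probability of action $H$ if the game ends in that memory state). A sender strategy is $\sigma:M\times\Theta\to[0,1]$, the probability of stopping in the current memory state given $\theta$. Timing: $m_0\sim g$; in each period $t=0,1,\dots$, with current memory state $m_t$, the game ends if $m_t$ is absorbing ($f(m_t,s)(m_t)=1$ for all $s$); otherwise the sender stops with probability $\sigma(m_t,\theta)$, ending the game; if not stopped, a signal $s_t\sim\pi_\theta$ is generated and $m_{t+1}\sim f(m_t,s_t)$. When the game ends in state $m_t$ the receiver takes action $H$ with probability $a(m_t)$ and $L$ otherwise. The sender's payoff is $1$ if the action is $H$ and $0$ otherwise; there is no discounting; if the game never ends she gets $0$. Since $\pi_\theta$ has full support, which transitions have positive probability does not depend on $\theta$; absorbing/transient refer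 to the Markov chain on $M$ induced by $f$ with signals from $\pi_\theta$. A protocol is parsimonious if (i) it has exactly two absorbing memory states, one in which $a=0$ and one in which $a=1$, and (ii) all other memory states are transient with $a=0$. *)

(* Defs.v *)
From HB Require Import structures.
From mathcomp Require Import all_boot all_order all_algebra.
From mathcomp Require Import all_classical all_reals all_analysis.
Set Implicit Arguments. Unset Strict Implicit. Unset Printing Implicit Defensive.
Import Order.TTheory GRing.Theory Num.Theory.
Local Open Scope ring_scope.

Inductive Theta := TH | TL.

Section Game.
Variables (R : realType) (M S : finType).

(* signal distributions pi theta s; transition f i s j; initial g; action a *)
Definition is_dist (d : M -> R) := (forall j, 0 <= d j) /\ \sum_j d j = 1.

Definition signal_dists (pi : Theta -> S -> R) :=
  forall th, (forall s, 0 < pi th s) /\ \sum_s pi th s = 1.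

Definition transition_ok (f : M -> S -> M -> R) :=
  forall i s, is_dist (f i s).

Definition absorbing (f : M -> S -> M -> R) (m : M) : bool :=
  [forall s, f m s m == 1].

Definition Pmat (f : M -> S -> M -> R) (pi : Theta -> S -> R) th (i j : M) : R :=
  \sum_s pi th s * f i s j.

(* taboo probabilities: first_hit f pi th m n j = probability, starting from j,
   that the chain visits m for the first time (after time 0) at time n+1 *)
Fixpoint first_hit (f : M -> S -> M -> R) (pi : Theta -> S -> R) th (m : M)
    (n : nat) (j : M) : R :=
  match n with
  | 0 => Pmat f pi th j m
  | n'.+1 => \sum_(k | k != m) Pmat f pi th j k * first_hit f pi th m n' k
  end.

Definition transient (f : M -> S -> M -> R) (pi : Theta -> S -> R) th (m : M) : Prop :=
  (\sum_(0 <= n <oo) (first_hit f pi th m n m)%:E < 1)%E.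

Definition parsimonious (f : M -> S -> M -> R) (pi : Theta -> S -> R)
    (a : M -> R) : Prop :=
  exists m0 m1 : M,
    m0 <> m1 /\ absorbing f m0 /\ absorbing f m1 /\ a m0 = 0 /\ a m1 = 1 /\
    (forall m, absorbing f m -> m = m0 \/ m = m1) /\
    (forall m, m <> m0 -> m <> m1 ->
       (forall th, transient f pi th m) /\ a m = 0).

(* sender strategies: probability of stopping *)
Definition strategy_ok (sigma : M -> Theta -> R) :=
  forall m th, 0 <= sigma m th <= 1.

(* alive f pi g sigma th t m : probability that the game has not ended before
   period t and the memory state at period t is m *)
Fixpoint alive (f : M -> S -> M -> R) (pi : Theta -> S -> R) (g : M -> R)
    (sigma : M -> Theta -> R) th (t : nat) (j : M) : R :=
  match t with
  | 0 => g j
  | t'.+1 => \sum_m alive f pi g sigma th t' m *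
               (if absorbing f m then 0 else 1 - sigma m th) *
               Pmat f pi th m j
  end.

(* probability that the game ends in period t with action H *)
Definition gain_at (f : M -> S -> M -> R) (pi : Theta -> S -> R) (g : M -> R)
    (a : M -> R) (sigma : M -> Theta -> R) th (t : nat) : R :=
  \sum_m alive f pi g sigma th t m *
    (if absorbing f m then 1 else sigma m th) * a m.

(* sender's expected payoff = probability of action H (0 if game never ends) *)
Definition payoff (f : M -> S -> M -> R) (pi : Theta -> S -> R) (g : M -> R)
    (a : M -> R) (sigma : M -> Theta -> R) th : \bar R :=
  (\sum_(0 <= t <oo) (gain_at f pi g a sigma th t)%:E)%E.

End Game.

(* Main.v *)
Require Import Defs.
From HB Require Import structures.
From mathcomp Require Import all_boot all_order all_algebra.
From mathcomp Require Import all_classical all_reals all_analysis.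
Import Order.TTheory GRing.Theory Num.Theory.
Local Open Scope ring_scope.

Theorem lemma3 (R : realType) (M S : finType)
    (pi : Theta -> S -> R) (f : M -> S -> M -> R) (g : M -> R) (a : M -> R) :
  signal_dists pi -> pi TH <> pi TL ->
  transition_ok f -> is_dist g -> (forall m, 0 <= a m <= 1) ->
  parsimonious f pi a ->
  forall (th : Theta) (sigma_star : M -> Theta -> R),
    strategy_ok sigma_star ->
    (forall m, transient f pi th m -> sigma_star m th = 0) ->
    forall sigma : M -> Theta -> R, strategy_ok sigma ->
      (payoff f pi g a sigma th <= payoff f pi g a sigma_star th)%E.
Proof.
move=> hpi _ hf hg ha [m0 [m1 [hne [ab0 [ab1 [a0 [a1 [habs htr]]]]]]]] th ss hss hss0 sg hsg.
have Pge0 : forall i j, 0 <= Pmat f pi th i j.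
  move=> i j; rewrite /Pmat; apply: sumr_ge0 => s _; apply: mulr_ge0.
    by apply: ltW; case: (hpi th) => h _; apply: h.
  by case: (hf i s) => h _; apply: h.
have hna : forall m, ~~ absorbing f m -> ss m th = 0 /\ a m = 0.
  move=> m hm.
  have h0 : m <> m0 by move=> e; rewrite e ab0 in hm.
  have h1 : m <> m1 by move=> e; rewrite e ab1 in hm.
  have [ht ham] := htr m h0 h1.
  by split => //; apply: hss0; apply: ht.
have key : forall t j, 0 <= alive f pi g sg th t j /\
                       alive f pi g sg th t j <= alive f pi g ss th t j.
  elim=> [|t IH] j /=.
    by split; [case: hg => h _; apply: h | apply: lexx].
  have hc : forall m, 0 <= (if absorbing f m then 0 else 1 - sg m th) /\
     (if absorbing f m then 0 else 1 - sg m th) <=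
     (if absorbing f m then 0 else 1 - ss m th).
    move=> m; case: (boolP (absorbing f m)) => hm; first by split.
    rewrite (hna m hm).1 subr0; have /andP[h1 h2] := hsg m th.
    by split; [rewrite subr_ge0 | rewrite lerBlDr lerDl].
  split.
    apply: sumr_ge0 => m _; apply: mulr_ge0 => //; apply: mulr_ge0.
      exact: (IH m).1.
    exact: (hc m).1.
  apply: ler_sum => m _; apply: ler_wpM2r => //.
  apply: ler_pM; [exact: (IH m).1 | exact: (hc m).1 | exact: (IH m).2 | exact: (hc m).2].
rewrite /payoff; apply: lee_nneseries => [t _ _|t _].
  rewrite lee_fin /gain_at; apply: sumr_ge0 => m _; apply: mulr_ge0.
    apply: mulr_ge0; first exact: (key t m).1.
    case: (absorbing f m) => //; have /andP[] := hsg m th => //.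
  by have /andP[] := ha m.
rewrite lee_fin /gain_at; apply: ler_sum => m _.
case: (boolP (absorbing f m)) => hm.
  rewrite !mulr1; apply: ler_wpM2r; first by have /andP[] := ha m.
  exact: (key t m).2.
by rewrite (hna m hm).2 !mulr0.
Qed.
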